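(* Let $\Pi=(\mathsf A,\mathsf B)$ be a protocol and let $M^{\mathsf A}_\Pi$ be its $\mathsf A$-dominated measure. Then $\mathrm{Best}_{\mathsf B}(\Pi)=1-\mathbb E_{\ell\leftarrow L_\Pi}[M^{\mathsf A}_\Pi(\ell)]$.
   Context: An $m$-round single-bit-message protocol $\Pi$ is identified with the complete binary tree of height $m$ (nodes: binary strings of length $\le m$, root $\lambda$), with a control scheme, edge probabilities $e_\Pi(u,ub)$, common output $\chi_\Pi:\text{leaves}\to\{0,1\}$, node-visit probabilities $v_\Pi(u)$ and leaf distribution $L_\Pi$. For $b\in\{0,1\}$, $\Pi_b$ is the subprotocol on the subtree rooted at $b$ (the protocol conditioned on the first bit being $b$); its leaves are identified with leaves of $\Pi$ starting with $b$. Expectations over $L_\perp$ (undefined protocol) are $0$. The $\mathsf A$-dominated measure $M^{\mathsf A}_\Pi:\text{leaves}\to[0,1]$: if $\Pi$ has $0$ rounds with single leaf $\ell$, $M^{\mathsf A}_\Pi(\ell)=\chi_\Pi(\ell)$; otherwise, for a leaf $\ell$ with first bit $b=\ell_1$, writing $\mu_c=\mathbb E_{L_{\Pi_c}}[M^{\mathsf A}_{\Pi_c}]$: $M^{\mathsf A}_\Pi(\ell)=0$ if $e_\Pi(\lambda,b)=0$; $=M^{\mathsf A}_{\Pi_b}(\ell)$ if $e_\Pi(\lambda,b)=1$; $=M^{\mathsf A}_{\Pi_b}(\ell)$ if $e_\Pi(\lambda,b)\in(0,1)$ and ($\mathsf A$ controls the root or $\mu_b\le\mu_{1-b}$); and $=\frac{\mu_{1-b}}{\mu_b}M^{\mathsf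 A}_{\Pi_b}(\ell)$ otherwise. A deterministic strategy $\mathsf B'$ for $\mathsf B$ is valid if $v_\Pi(u)=0\Rightarrow v_{(\mathsf A,\mathsf B')}(u)=0$ for all $u$; $\mathrm{Best}_{\mathsf B}(\Pi)=\max_{\text{valid }\mathsf B'}(1-\mathrm{val}(\mathsf A,\mathsf B'))$, where $\mathrm{val}$ is the expected common output. *)

(* Defs.v *)
From HB Require Import structures.
From mathcomp Require Import all_boot all_order all_algebra.
Set Implicit Arguments. Unset Strict Implicit. Unset Printing Implicit Defensive.
Import Order.TTheory GRing.Theory Num.Theory.
Local Open Scope ring_scope.

(* An m-round single-bit-message protocol on the complete binary tree of
   height m; nodes are bit sequences of size <= m, the root is [::].
   Only values on nodes (resp. internal nodes, leaves) are meaningful. *)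
Record protocol (R : realFieldType) := Protocol {
  rounds : nat;
  ctrlA  : seq bool -> bool;
  edge   : seq bool -> bool -> R;  (* edge u b = e_Pi(u, ub) *)
  chi    : seq bool -> bool        (* common output on leaves *)
}.

Section Defs.
Variable R : realFieldType.

Definition wf_protocol (P : protocol R) : Prop :=
  forall u : seq bool, (size u < rounds P)%N ->
    (forall b, 0 <= edge P u b) /\ edge P u false + edge P u true = 1.

Definition visitE (e : seq bool -> bool -> R) (u : seq bool) : R :=
  \prod_(i < size u) e (take i u) (nth false u i).

Definition visit (P : protocol R) (u : seq bool) : R := visitE (edge P) u.

Definition Exp (n : nat) (P : protocol R) (f : seq bool -> R) : R :=
  \sum_(t : n.-tuple bool) visit P t * f t.

Definition ExpL (P : protocol R) (f : seq bool -> R) : R := Exp (rounds P) P f.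

(* the subprotocol Pi_b on the subtree rooted at b; its leaves (of size
   m-1) correspond to the leaves b :: l of Pi *)
Definition subp (P : protocol R) (b : bool) : protocol R :=
  Protocol (rounds P).-1 (fun u => ctrlA P (b :: u))
           (fun u => edge P (b :: u)) (fun u => chi P (b :: u)).

Fixpoint Mrec (n : nat) (P : protocol R) (l : seq bool) {struct n} : R :=
  match n with
  | 0 => (chi P l)%:R
  | n'.+1 =>
    let b := head false l in
    let Mb := Mrec n' (subp P b) (behead l) in
    let mu c := Exp n' (subp P c) (Mrec n' (subp P c)) in
    let eb := edge P [::] b in
    if eb == 0 then 0
    else if eb == 1 then Mb
    else if ctrlA P [::] || (mu b <= mu (~~ b)) then Mb
    else mu (~~ b) / mu b * Mb
  end.

Definition Mdom (P : protocol R) : seq bool -> R := Mrec (rounds P) P.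

(* deterministic strategies for B: at a B-controlled node u, B sends s u *)
Definition strategy := seq bool -> bool.

Definition execE (P : protocol R) (s : strategy) (u : seq bool) (b : bool) : R :=
  if ctrlA P u then edge P u b else (s u == b)%:R.

Definition valid (P : protocol R) (s : strategy) : Prop :=
  forall u : seq bool, (size u <= rounds P)%N ->
    visit P u = 0 -> visitE (execE P s) u = 0.

Definition val (P : protocol R) (s : strategy) : R :=
  \sum_(t : (rounds P).-tuple bool) visitE (execE P s) t * (chi P t)%:R.

Definition is_BestB (P : protocol R) (x : R) : Prop :=
  (exists s, valid P s /\ 1 - val P s = x) /\
  (forall s, valid P s -> 1 - val P s <= x).

End Defs.

(* Main.v *)
Require Import Defs.
From HB Require Import structures.
From mathcomp Require Import all_boot all_order all_algebra.
Set Implicit Arguments. Unset Strict Implicit. Unset Printing Implicit Defensive.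
Import Order.TTheory GRing.Theory Num.Theory.
Local Open Scope ring_scope.

Section H.
Variable R : realFieldType.

Lemma sum_tupleS n (F : seq bool -> R) :
  \sum_(t : n.+1.-tuple bool) F t = \sum_(b : bool) \sum_(t : n.-tuple bool) F (b :: t).
Proof.
rewrite pair_big /=.
rewrite (reindex (fun p : bool * n.-tuple bool => [tuple of p.1 :: p.2])) /=; last first.
  exists (fun t : n.+1.-tuple bool => (thead t, [tuple of behead t])).
    by move=> [b t] _ /=; rewrite theadE; congr pair; apply: val_inj.
  by move=> t _; rewrite [t in RHS]tuple_eta.
by apply: eq_bigr => -[b t].
Qed.

Lemma visitE_cons (e : seq bool -> bool -> R) b t :
  visitE e (b :: t) = e [::] b * visitE (fun u => e (b :: u)) t.
Proof.
by rewrite /visitE /= big_ord_recl /=.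
Qed.

Definition SumE n (e : seq bool -> bool -> R) (f : seq bool -> R) :=
  \sum_(t : n.-tuple bool) visitE e t * f t.

Lemma SumE_S n e f : SumE n.+1 e f =
  \sum_(b : bool) e [::] b * SumE n (fun u => e (b :: u)) (fun t => f (b :: t)).
Proof.
rewrite /SumE (sum_tupleS _ (fun t => visitE e t * f t)); apply: eq_bigr => b _.
rewrite big_distrr /=; apply: eq_bigr => t _.
by rewrite visitE_cons mulrA.
Qed.

Lemma sum_tuple0 (F : seq bool -> R) : \sum_(t : 0.-tuple bool) F t = F [::].
Proof.
rewrite (eq_bigr (fun _ => F [::])); last by move=> t _; rewrite tuple0.
by rewrite sumr_const card_tuple expn0.
Qed.

Lemma sum_bool (F : bool -> R) : \sum_(b : bool) F b = F true + F false.
Proof. by rewrite big_bool. Qed.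

Lemma Exp_S n (P : protocol R) f : Exp n.+1 P f =
  \sum_(b : bool) edge P [::] b * Exp n (subp P b) (fun t => f (b :: t)).
Proof. exact: (SumE_S n (edge P) f). Qed.

Lemma Exp_scale n (P : protocol R) c g : Exp n P (fun t => c * g t) = c * Exp n P g.
Proof. by rewrite /Exp big_distrr; apply: eq_bigr => t _; rewrite mulrCA. Qed.

Definition mu n (P : protocol R) c := Exp n (subp P c) (Mrec n (subp P c)).
Definition cf n (P : protocol R) b :=
  let eb := edge P [::] b in
  if eb == 0 then 0 else if eb == 1 then 1
  else if ctrlA P [::] || (mu n P b <= mu n P (~~ b)) then 1
  else mu n P (~~ b) / mu n P b.

Lemma Mrec_cons n (P : protocol R) b t :
  Mrec n.+1 P (b :: t) = cf n P b * Mrec n (subp P b) t.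
Proof.
rewrite /= /cf /mu.
case: ifP => _; first by rewrite mul0r.
case: ifP => _; first by rewrite mul1r.
by case: ifP => _; rewrite ?mul1r.
Qed.

Lemma muS n (P : protocol R) : Exp n.+1 P (Mrec n.+1 P) =
  \sum_(b : bool) edge P [::] b * (cf n P b * mu n P b).
Proof.
rewrite Exp_S; apply: eq_bigr => b _.
congr (_ * _); rewrite /mu -Exp_scale.
by apply: eq_bigr => t _; rewrite Mrec_cons.
Qed.

Lemma val_S n (P : protocol R) (s : strategy) : rounds P = n.+1 ->
  Defs.val P s = \sum_(b : bool) execE P s [::] b * Defs.val (subp P b) (fun u => s (b :: u)).
Proof.
move=> hn.
change (SumE (rounds P) (execE P s) (fun t => (chi P t)%:R) =
  \sum_(b : bool) execE P s [::] b *
   SumE (rounds P).-1 (execE (subp P b) (fun u => s (b :: u))) (fun t => (chi P (b :: t))%:R)).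
by rewrite hn SumE_S.
Qed.

Lemma visitE1 (e : seq bool -> bool -> R) b : visitE e [:: b] = e [::] b.
Proof. by rewrite visitE_cons /visitE big_ord0 mulr1. Qed.

Lemma valid_sub n (P : protocol R) (s : strategy) b : rounds P = n.+1 -> valid P s ->
  execE P s [::] b != 0 -> valid (subp P b) (fun u => s (b :: u)).
Proof.
move=> hn hv hx u hu hvis.
have := hv (b :: u); rewrite hn /= ltnS => /(_ ltac:(by move: hu; rewrite /= hn)).
rewrite /visit visitE_cons; move: hvis; rewrite /visit /= => ->.
rewrite mulr0 => /(_ erefl) /eqP; rewrite visitE_cons mulf_eq0 (negbTE hx) /=.
by move/eqP.
Qed.

Lemma valid_root n (P : protocol R) (s : strategy) b : rounds P = n.+1 -> valid P s ->
  edge P [::] b = 0 -> execE P s [::] b = 0.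
Proof.
move=> hn hv he; have := hv [:: b]; rewrite hn /= /visit !visitE1.
by move=> /(_ erefl he).
Qed.

Lemma valid_build n (P : protocol R) (s : strategy) : rounds P = n.+1 ->
  (forall b, edge P [::] b = 0 -> execE P s [::] b = 0) ->
  (forall b, valid (subp P b) (fun u => s (b :: u))) -> valid P s.
Proof.
move=> hn hr hs [|b u] hu.
  by rewrite /visit /visitE big_ord0 => /eqP; rewrite oner_eq0.
rewrite /visit !visitE_cons => /eqP; rewrite mulf_eq0 => /orP [/eqP he|/eqP hv].
  by rewrite hr ?mul0r.
have := hs b u; rewrite /= hn /= => /(_ ltac:(by move: hu; rewrite hn) hv) ->.
by rewrite mulr0.
Qed.

Lemma wf_sub (P : protocol R) b : wf_protocol P -> wf_protocol (subp P b).
Proof.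
move=> hw u hu; apply: hw => /=; move: hu => /=.
by case: (rounds P) => [|k] //=; rewrite ltnS.
Qed.

Lemma charA n (P : protocol R) : ctrlA P [::] ->
  Exp n.+1 P (Mrec n.+1 P) = \sum_(b : bool) edge P [::] b * mu n P b.
Proof.
move=> hA; rewrite muS; apply: eq_bigr => b _; rewrite /cf hA /=.
case: eqP => [->|_]; first by rewrite !mul0r.
by case: eqP => _; rewrite mul1r.
Qed.

Lemma charB n (P : protocol R) : wf_protocol P -> rounds P = n.+1 ->
  ~~ ctrlA P [::] -> (forall b, 0 <= mu n P b) ->
  exists c, [/\ edge P [::] c != 0, Exp n.+1 P (Mrec n.+1 P) = mu n P c &
     forall b, edge P [::] b != 0 -> mu n P c <= mu n P b].
Proof.
move=> hw hn hB hpos.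
have [he0 he1] := hw [::] (ltac:(by rewrite hn)).
have hA : ctrlA P [::] = false by apply: negbTE.
rewrite muS sum_bool.
have [z0|nz0] := eqVneq (edge P [::] false) 0.
  have e1 : edge P [::] true = 1 by move: he1; rewrite z0 add0r.
  exists true; split.
  - by rewrite e1 oner_eq0.
  - by rewrite z0 mul0r addr0 e1 mul1r /cf e1 eqxx oner_eq0 mul1r.
  - by case=> //; rewrite z0 eqxx.
have [z1|nz1] := eqVneq (edge P [::] true) 0.
  have e0 : edge P [::] false = 1 by move: he1; rewrite z1 addr0.
  exists false; split.
  - by rewrite e0 oner_eq0.
  - by rewrite z1 mul0r add0r e0 mul1r /cf e0 eqxx oner_eq0 mul1r.
  - by case=> //; rewrite z1 eqxx.
have n1 : forall b, edge P [::] b != 1.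
  case; apply/eqP => h1; move: he1; rewrite h1 ?(addrC 1) => /eqP;
  by rewrite -subr_eq0 addrK ?(negbTE nz0) ?(negbTE nz1).
have nz : forall b, edge P [::] b != 0 by case.
pose c := if mu n P false <= mu n P true then false else true.
have hc : mu n P c <= mu n P (~~ c).
  rewrite /c; case: ifP => // /negbT; rewrite -ltNge => /ltW //.
have key : forall b, cf n P b * mu n P b = mu n P c.
  move=> b; rewrite /cf (negbTE (nz b)) (negbTE (n1 b)) hA /=.
  have [->|bc] := eqVneq b c; first by rewrite hc mul1r.
  have -> : b = ~~ c by case: b c bc {hc} => -[].
  rewrite negbK; case: ifP => [h|/negbT]; first by rewrite mul1r; apply/eqP; rewrite eq_le h hc.
  rewrite -ltNge => hlt; rewrite divfK //.
  by apply: lt0r_neq0; apply: le_lt_trans hlt.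
exists c; split.
- exact: nz.
- by rewrite !key -mulrDl addrC he1 mul1r.
- move=> b _; have [->|bc] := eqVneq b c => //.
  by have -> : b = ~~ c by case: b c bc {hc key} => -[].
Qed.

Lemma mainrec n : forall P : protocol R, rounds P = n -> wf_protocol P ->
  [/\ 0 <= Exp n P (Mrec n P),
      exists s, valid P s /\ Defs.val P s = Exp n P (Mrec n P) &
      forall s, valid P s -> Exp n P (Mrec n P) <= Defs.val P s].
Proof.
elim: n => [|n IH] P hn hw.
  have E : Exp 0 P (Mrec 0 P) = (chi P [::])%:R.
    by rewrite /Exp (sum_tuple0 (fun t => visit P t * Mrec 0 P t)) /visit /visitE big_ord0 mul1r.
  have V : forall s, Defs.val P s = (chi P [::])%:R.
    move=> s; change (SumE (rounds P) (execE P s) (fun t => (chi P t)%:R) = (chi P [::])%:R).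
    by rewrite hn /SumE (sum_tuple0 (fun t => visitE (execE P s) t * (chi P t)%:R)) /visitE big_ord0 mul1r.
  rewrite E; split.
  - by case: (chi P [::]).
  - by exists (fun _ => false); split; [move=> u; rewrite hn leqn0 => /nilP -> /=; rewrite /visit /visitE big_ord0 => /eqP; rewrite oner_eq0 | rewrite V].
  - by move=> s _; rewrite V.
have hsub b : rounds (subp P b) = n by rewrite /= hn.
have IHb b := IH (subp P b) (hsub b) (@wf_sub P b hw).
have hpos b : 0 <= mu n P b by case: (IHb b).
have [he0 he1] := hw [::] (ltac:(by rewrite hn)).
have [_ [s0 [v0 w0]] _] := IHb false.
have [_ [s1 [v1 w1]] _] := IHb true.
pose sb b := if b then s1 else s0.
have sbP b : valid (subp P b) (sb b) /\ Defs.val (subp P b) (sb b) = mu n P b.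
  by case: b.
have lowb b s : valid (subp P b) s -> mu n P b <= Defs.val (subp P b) s.
  by case: (IHb b) => _ _; apply.
pose mk (c : bool) : strategy := fun u => match u with [::] => c | b :: u' => sb b u' end.
have mkval c : (forall b, edge P [::] b = 0 -> execE P (mk c) [::] b = 0) -> valid P (mk c).
  move=> h; apply: (valid_build hn h) => b; exact: (sbP b).1.
have mkv c : Defs.val P (mk c) = \sum_(b : bool) execE P (mk c) [::] b * mu n P b.
  by rewrite (val_S _ hn); apply: eq_bigr => b _; rewrite -(sbP b).2.
case hA : (ctrlA P [::]).
  rewrite (charA _ hA); split.
  - by apply: sumr_ge0 => b _; apply: mulr_ge0 => //; case: b.
  - exists (mk false); split.
      by apply: mkval => b; rewrite /execE hA.
    by rewrite mkv; apply: eq_bigr => b _; rewrite /execE hA.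
  - move=> s hv; rewrite (val_S _ hn); apply: ler_sum => b _; rewrite /execE hA.
    have [->|nz] := eqVneq (edge P [::] b) 0; first by rewrite !mul0r.
    apply: ler_wpM2l; first by case: b {nz}.
    apply: lowb; apply: (valid_sub hn hv); by rewrite /execE hA.
have [c [nzc Ec minc]] := charB hw hn (negbT hA) hpos.
rewrite Ec; split => //.
- exists (mk c); split.
    apply: mkval => b hb; rewrite /execE hA /=.
    by case: eqP => // ec; move: nzc; rewrite ec hb eqxx.
  rewrite mkv sum_bool /execE hA /=.
  by case: c {nzc Ec minc} => /=; rewrite mul1r mul0r ?addr0 ?add0r.
- move=> s hv; rewrite (val_S _ hn) sum_bool /execE hA /=.
  set d := s [::].
  have hd : execE P s [::] d != 0 by rewrite /execE hA eqxx oner_eq0.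
  have nzd : edge P [::] d != 0.
    by apply/eqP => hz; move: hd; rewrite (valid_root hn hv hz) eqxx.
  have := lowb d _ (valid_sub hn hv hd).
  have := minc d nzd.
  by case: d hd nzd => _ _ /=; rewrite mul1r mul0r ?addr0 ?add0r; apply: le_trans.
Qed.
End H.

Theorem lemma3p12 (R : realFieldType) (P : protocol R) :
  wf_protocol P ->
  is_BestB P (1 - ExpL P (Mdom P)).
Proof.
move=> hw; have [_ [s [hv hs]] hlow] := mainrec (erefl (rounds P)) hw.
split.
  by exists s; split => //; rewrite hs.
by move=> s' hv'; rewrite lerD2l lerN2; apply: hlow.
Qed.
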